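(* Let $N \ge 1$ and let $f_N(t) = \sum_{n=1}^N c_n e^{\alpha_n t}$ with real coefficients $c_n$ and real rate constants $\alpha_n$ that are pairwise distinct and all nonzero, and assume $f_N(t) \ge 0$ for all $t \ge 0$. Let $t_1,\dots,t_{2N}$ be distinct nonnegative reals. For $k \ge 0$ let $$I_{(k)}(t) := \int_0^{t}\int_0^{t^{(1)}}\cdots\int_0^{t^{(k)}} f_N(t^{(k+1)})\, dt^{(k+1)} \cdots dt^{(1)}$$ denote the $(k+1)$-fold iterated integral of $f_N$ from $0$ (so $I_{(0)}(t)=\int_0^t f_N(s)\,ds$). Then the data $\{f_N(t_i) : i = 1,\dots,2N\}$ together with $\{I_{(k)}(t_i) : k = 0,1,\dots,N,\ i = 1,\dots,2N\}$ uniquely determine the coefficients $c_n$ and the rate constants $\alpha_n$, $n = 1,\dots,N$. *)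

(* Defs.v *)
From Stdlib Require Import Reals.
From Coquelicot Require Import Coquelicot.
Open Scope R_scope.

(* f_N(t) = sum_{n=0}^{N-1} c n * exp (a n * t)  (0-based indexing of the N terms) *)
Fixpoint expsum (c a : nat -> R) (N : nat) (t : R) : R :=
  match N with
  | O => 0
  | S m => expsum c a m t + c m * exp (a m * t)
  end.

Fixpoint iter_int (f : R -> R) (k : nat) (t : R) : R :=
  match k with
  | O => RInt f 0 t
  | S k' => RInt (iter_int f k') 0 t
  end.

Definition admissible (N : nat) (c a : nat -> R) : Prop :=
  (forall n m, (n < N)%nat -> (m < N)%nat -> a n = a m -> n = m) /\
  (forall n, (n < N)%nat -> a n <> 0) /\
  (forall n, (n < N)%nat -> c n <> 0) /\
  (forall t, 0 <= t -> 0 <= expsum c a N t).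

(* Main.v *)
Require Import Defs.
From Stdlib Require Import Reals Lra Lia List Classical_Prop.
From Coquelicot Require Import Coquelicot.
Open Scope R_scope.

Definition inj_on (n : nat) (z : nat -> R) :=
  forall i j, (i < n)%nat -> (j < n)%nat -> z i = z j -> i = j.

Lemma argmax (z : nat -> R) (K : nat) :
  exists j, (j <= K)%nat /\ forall i, (i <= K)%nat -> z i <= z j.
Proof.
  induction K as [|K [j [Hj Hm]]].
  - exists 0%nat; split; [lia|]; intros i Hi; replace i with 0%nat by lia; lra.
  - destruct (Rle_dec (z j) (z (S K))).
    + exists (S K); split; [lia|]; intros i Hi.
      destruct (Nat.eq_dec i (S K)); [subst; lra|].
      assert (z i <= z j) by (apply Hm; lia); lra.
    + exists j; split; [lia|]; intros i Hi.
      destruct (Nat.eq_dec i (S K)); [subst; lra|]. apply Hm; lia.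
Qed.

Lemma rolle_list (h h' : R -> R) (Hd : forall t, derivable_pt_lim h t (h' t)) :
  forall K z, inj_on (S K) z -> (forall i, (i < S K)%nat -> h (z i) = 0) ->
  exists w M, (exists j, (j < S K)%nat /\ z j = M) /\
    (forall i, (i < S K)%nat -> z i <= M) /\ inj_on K w /\
    (forall i, (i < K)%nat -> h' (w i) = 0 /\ w i < M).
Proof.
  induction K as [|K IH]; intros z Hz Hh.
  - exists (fun _ => 0), (z 0%nat); split; [exists 0%nat; split; [lia|reflexivity]|].
    split; [intros i Hi; replace i with 0%nat by lia; lra|].
    split; [intros i j Hi; lia|intros i Hi; lia].
  - destruct (argmax z (S K)) as [j [Hj Hm]].
    set (z' := fun i => if Nat.eq_dec i j then z (S K) else z i).
    assert (Hz' : inj_on (S K) z').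
    { intros i i' Hi Hi'; unfold z'.
      destruct (Nat.eq_dec i j); destruct (Nat.eq_dec i' j); intros E.
      - lia.
      - apply Hz in E; lia.
      - apply Hz in E; lia.
      - apply Hz in E; lia. }
    assert (Hh' : forall i, (i < S K)%nat -> h (z' i) = 0).
    { intros i Hi; unfold z'; destruct (Nat.eq_dec i j); apply Hh; lia. }
    destruct (IH z' Hz' Hh') as [w [M' [[j' [Hj' EM]] [HM' [Hw Hw']]]]].
    assert (Hk : exists k, (k < S (S K))%nat /\ k <> j /\ z k = M').
    { unfold z' in EM; destruct (Nat.eq_dec j' j).
      - exists (S K); split; [lia|]; split; [lia|]; auto.
      - exists j'; split; [lia|]; split; auto. }
    destruct Hk as [k [Hk1 [Hk2 Hk3]]].
    assert (Hlt : M' < z j).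
    { assert (M' <= z j) by (rewrite <- Hk3; apply Hm; lia).
      destruct (Req_dec M' (z j)) as [E|]; [|lra].
      rewrite <- Hk3 in E; apply Hz in E; lia. }
    destruct (MVT_cor2 h h' M' (z j) Hlt (fun c _ => Hd c)) as [zeta [Ez Iz]].
    assert (HhM : h M' = 0) by (rewrite <- Hk3; apply Hh; lia).
    assert (Hhj : h (z j) = 0) by (apply Hh; lia).
    rewrite HhM, Hhj in Ez.
    assert (Hzeta : h' zeta = 0).
    { assert (z j - M' <> 0) by lra.
      apply (Rmult_eq_reg_r (z j - M')); [lra|auto]. }
    exists (fun i => if Nat.eq_dec i K then zeta else w i), (z j).
    split; [exists j; split; [lia|auto]|].
    split; [intros i Hi; apply Hm; lia|].
    split.
    + intros i i' Hi Hi'.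
      destruct (Nat.eq_dec i K); destruct (Nat.eq_dec i' K); intros E.
      * lia.
      * assert (w i' < M') by (apply Hw'; lia); lra.
      * assert (w i < M') by (apply Hw'; lia); lra.
      * apply Hw; auto; lia.
    + intros i Hi; destruct (Nat.eq_dec i K).
      * split; [auto|lra].
      * assert (h' (w i) = 0 /\ w i < M') by (apply Hw'; lia); split; lra.
Qed.
Fixpoint val (l : list (R*R)) (t : R) : R :=
  match l with nil => 0 | p :: r => fst p * exp (snd p * t) + val r t end.

Fixpoint dist (l : list (R*R)) : Prop :=
  match l with nil => True | p :: r => List.Forall (fun q => snd q <> snd p) r /\ dist r end.

Definition shift (d : R) (p : R*R) : R*R := (fst p, snd p + d).
Definition dpair (p : R*R) : R*R := (fst p * snd p, snd p).

Lemma val_shift l d t : val l t * exp (d * t) = val (map (shift d) l) t.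
Proof.
  induction l as [|p r IH]; simpl; [lra|].
  rewrite Rmult_plus_distr_r, IH, Rmult_assoc, <- exp_plus; f_equal; f_equal; f_equal; ring.
Qed.

Lemma val_deriv l t : derivable_pt_lim (val l) t (val (map dpair l) t).
Proof.
  induction l as [|p r IH]; simpl.
  - apply derivable_pt_lim_const.
  - apply (derivable_pt_lim_plus (fun t => fst p * exp (snd p * t)) (val r)); auto.
    apply is_derive_Reals.
    unfold dpair; simpl. auto_derive; auto. ring.
Qed.

Lemma val_zero l t : List.Forall (fun p => fst p = 0) l -> val l t = 0.
Proof.
  induction 1; simpl; auto. rewrite H, IHForall; ring.
Qed.

Lemma Z_list_n : forall n l, length l = n -> dist l -> forall z, inj_on (length l) z ->
  (forall i, (i < length l)%nat -> val l (z i) = 0) -> List.Forall (fun p => fst p = 0) l.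
Proof.
  induction n as [|n IH]; intros l Hn.
  - destruct l; [intros; constructor|discriminate].
  destruct l as [|[b be] r]; [discriminate|]. intros Hd z Hz Hzero.
  simpl in Hn; injection Hn as Hn.
  destruct Hd as [Hf Hd]. simpl in *.
  set (r' := map (shift (- be)) r).
  set (h := fun t => val r' t + b).
  set (h' := fun t => val (map dpair r') t).
  assert (Hh : forall t, derivable_pt_lim h t (h' t)).
  { intro t; unfold h, h'.
    replace (val (map dpair r') t) with (val (map dpair r') t + 0) by ring.
    apply derivable_pt_lim_plus; [apply val_deriv|apply derivable_pt_lim_const]. }
  assert (Hhz : forall i, (i < S (length r))%nat -> h (z i) = 0).
  { intros i Hi. unfold h, r'. rewrite <- val_shift.
    assert (E := Hzero i Hi).
    replace b with (b * exp (be * z i) * exp (- be * z i)).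
    - rewrite <- Rmult_plus_distr_r, Rplus_comm, E; ring.
    - rewrite Rmult_assoc, <- exp_plus. replace (be * z i + - be * z i) with 0 by ring.
      rewrite exp_0; ring. }
  destruct (rolle_list h h' Hh (length r) z Hz Hhz) as [w [M [_ [_ [Hw Hw']]]]].
  assert (Hlen : length (map dpair r') = length r) by (unfold r'; rewrite !length_map; auto).
  assert (Hdist : dist (map dpair r')).
  { unfold r'. clear -Hd. induction r as [|q r IHr]; simpl in *; auto.
    destruct Hd as [Hq Hd]; split; auto.
    rewrite !List.Forall_map. eapply List.Forall_impl; [|exact Hq].
    intros a Ha; simpl. intro E; apply Ha; lra. }
  assert (HF : List.Forall (fun p => fst p = 0) (map dpair r')).
  { apply (IH _ (eq_trans Hlen Hn) Hdist w); rewrite Hlen; auto.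
    intros i Hi; apply Hw'; auto. }
  assert (Hr : List.Forall (fun p => fst p = 0) r).
  { unfold r' in HF; rewrite !List.Forall_map in HF.
    clear -HF Hf. induction r as [|q r IHr]; constructor; inversion HF; inversion Hf; subst.
    - unfold dpair, shift in *; simpl in *.
      destruct (Rmult_integral _ _ H1); auto. exfalso; apply H5; lra.
    - apply IHr; auto. }
  constructor; auto.
  assert (E := Hhz 0%nat ltac:(lia)). unfold h in E.
  rewrite val_zero in E; [simpl; lra|].
  unfold r'; rewrite List.Forall_map. eapply List.Forall_impl; [|exact Hr]. auto.
Qed.
Fixpoint addp (c al : R) (l : list (R*R)) : list (R*R) :=
  match l with
  | nil => (c, al) :: nil
  | p :: r => if Req_EM_T al (snd p) then (fst p + c, snd p) :: r else p :: addp c al r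
  end.

Fixpoint coef (be : R) (l : list (R*R)) : R :=
  match l with nil => 0 | p :: r => (if Req_EM_T (snd p) be then fst p else 0) + coef be r end.

Lemma val_addp c al l t : val (addp c al l) t = val l t + c * exp (al * t).
Proof.
  induction l as [|[b g] r IH]; simpl; [ring|].
  destruct (Req_EM_T al g); simpl; [subst; ring|]. rewrite IH; ring.
Qed.

Lemma len_addp c al l : (length (addp c al l) <= S (length l))%nat.
Proof.
  induction l as [|[b g] r IH]; simpl; [lia|].
  destruct (Req_EM_T al g); simpl; lia.
Qed.

Lemma forall_addp c al g l : List.Forall (fun q => snd q <> g) l -> al <> g ->
  List.Forall (fun q => snd q <> g) (addp c al l).
Proof.
  induction 1; intros; simpl.
  - constructor; auto.
  - destruct (Req_EM_T al (snd x)); constructor; simpl; auto.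
Qed.

Lemma dist_addp c al l : dist l -> dist (addp c al l).
Proof.
  induction l as [|[b g] r IH]; simpl; intros.
  - split; auto.
  - destruct H. destruct (Req_EM_T al g); simpl; split; auto.
    apply forall_addp; auto.
Qed.

Lemma coef_addp be c al l : coef be (addp c al l) = coef be l + (if Req_EM_T al be then c else 0).
Proof.
  induction l as [|[b g] r IH]; simpl.
  - destruct (Req_EM_T al be); ring.
  - destruct (Req_EM_T al g); simpl.
    + subst. destruct (Req_EM_T g be); ring.
    + rewrite IH; ring.
Qed.

Lemma coef_zero be l : List.Forall (fun p => fst p = 0) l -> coef be l = 0.
Proof.
  induction 1; simpl; auto. rewrite H, IHForall. destruct (Req_EM_T _ _); ring.
Qed.

Fixpoint build (c a : nat -> R) (N : nat) (l : list (R*R)) : list (R*R) :=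
  match N with O => l | S m => addp (c m) (a m) (build c a m l) end.

Fixpoint csum (c a : nat -> R) (N : nat) (be : R) : R :=
  match N with O => 0 | S m => csum c a m be + (if Req_EM_T (a m) be then c m else 0) end.

Lemma val_build c a N l t : val (build c a N l) t = val l t + expsum c a N t.
Proof. induction N; simpl; [ring|]. rewrite val_addp, IHN; ring. Qed.

Lemma coef_build be c a N l : coef be (build c a N l) = coef be l + csum c a N be.
Proof. induction N; simpl; [ring|]. rewrite coef_addp, IHN; ring. Qed.

Lemma len_build c a N l : (length (build c a N l) <= N + length l)%nat.
Proof. induction N; simpl; [lia|]. pose proof (len_addp (c N) (a N) (build c a N l)); lia. Qed.

Lemma dist_build c a N l : dist l -> dist (build c a N l).
Proof. induction N; simpl; auto. intros; apply dist_addp; auto. Qed.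

Lemma expsum_opp c a N t : expsum (fun m => - c m) a N t = - expsum c a N t.
Proof. induction N; simpl; [ring|]. rewrite IHN; ring. Qed.

Lemma csum_opp c a N be : csum (fun m => - c m) a N be = - csum c a N be.
Proof. induction N; simpl; [ring|]. rewrite IHN. destruct (Req_EM_T _ _); ring. Qed.

Lemma csum_none c a N be : (forall k, (k < N)%nat -> a k <> be) -> csum c a N be = 0.
Proof.
  induction N; simpl; intros H; auto.
  rewrite IHN by (intros; apply H; lia).
  destruct (Req_EM_T (a N) be); [exfalso; apply (H N); auto|ring].
Qed.

Lemma csum_one c a N k : (forall n m, (n < N)%nat -> (m < N)%nat -> a n = a m -> n = m) ->
  (k < N)%nat -> csum c a N (a k) = c k.
Proof.
  induction N; intros Hd Hk; [lia|]. simpl.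
  destruct (Nat.eq_dec k N).
  - subst. rewrite csum_none.
    + destruct (Req_EM_T (a N) (a N)); [ring|congruence].
    + intros k' Hk' E; apply Hd in E; lia.
  - rewrite IHN; [|intros; apply Hd; auto; lia|lia].
    destruct (Req_EM_T (a N) (a k)); [apply Hd in e; lia|ring].
Qed.

Lemma fin_choice (N : nat) (P : nat -> nat -> Prop) :
  (forall n, (n < N)%nat -> exists k, P n k) -> exists f, forall n, (n < N)%nat -> P n (f n).
Proof.
  induction N; intros H.
  - exists (fun _ => 0%nat); intros; lia.
  - destruct IHN as [f Hf]; [intros; apply H; lia|].
    destruct (H N) as [k Hk]; [lia|].
    exists (fun n => if Nat.eq_dec n N then k else f n).
    intros n Hn; destruct (Nat.eq_dec n N); [subst; auto|apply Hf; lia].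
Qed.
Theorem theorem2 (N : nat) (HN : (1 <= N)%nat)
  (c a c' a' : nat -> R) (ts : nat -> R)
  (Hadm : admissible N c a) (Hadm' : admissible N c' a')
  (Hts0 : forall i, (i < 2 * N)%nat -> 0 <= ts i)
  (Htsd : forall i j, (i < 2 * N)%nat -> (j < 2 * N)%nat -> ts i = ts j -> i = j)
  (Hf : forall i, (i < 2 * N)%nat -> expsum c a N (ts i) = expsum c' a' N (ts i))
  (HI : forall k i, (k <= N)%nat -> (i < 2 * N)%nat ->
          iter_int (expsum c a N) k (ts i) = iter_int (expsum c' a' N) k (ts i)) :
  exists sigma : nat -> nat,
    (forall n, (n < N)%nat -> (sigma n < N)%nat) /\
    (forall n m, (n < N)%nat -> (m < N)%nat -> sigma n = sigma m -> n = m) /\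
    (forall n, (n < N)%nat -> c' n = c (sigma n) /\ a' n = a (sigma n)).
Proof.
  destruct Hadm as [Hda [_ [Hc _]]]. destruct Hadm' as [Hda' [_ [Hc' _]]].
  set (L := build (fun m => - c' m) a' N (build c a N nil)).
  assert (HlenL : (length L <= 2 * N)%nat).
  { unfold L. pose proof (len_build (fun m => - c' m) a' N (build c a N nil)).
    pose proof (len_build c a N nil). simpl in *; lia. }
  assert (HvalL : forall t, val L t = expsum c a N t - expsum c' a' N t).
  { intro t; unfold L; rewrite !val_build, expsum_opp; simpl; ring. }
  assert (HZ : List.Forall (fun p => fst p = 0) L).
  { apply (Z_list_n (length L) L eq_refl) with (z := ts).
    - unfold L; apply dist_build, dist_build; simpl; auto.
    - intros i j Hi Hj; apply Htsd; lia.
    - intros i Hi; rewrite HvalL, Hf by lia; ring. }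
  assert (Hcoef : forall be, csum c a N be = csum c' a' N be).
  { intro be. pose proof (coef_zero be L HZ) as E. unfold L in E.
    rewrite !coef_build, csum_opp in E; simpl in E; lra. }
  assert (Hex : forall n, (n < N)%nat -> exists k, (k < N)%nat /\ c' n = c k /\ a' n = a k).
  { intros n Hn. pose proof (Hcoef (a' n)) as E. rewrite (csum_one c' a' N n Hda' Hn) in E.
    destruct (Classical_Prop.classic (exists k, (k < N)%nat /\ a k = a' n)) as [[k [Hk Ek]]|Hno].
    - exists k; split; auto. rewrite <- Ek in E. rewrite csum_one in E; auto.
    - exfalso. rewrite csum_none in E; [apply (Hc' n Hn); auto|].
      intros k Hk Ek; apply Hno; eauto. }
  destruct (fin_choice N (fun n k => (k < N)%nat /\ c' n = c k /\ a' n = a k) Hex) as [sg Hsg].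
  exists sg; split; [intros n Hn; apply Hsg; auto|split].
  - intros n m Hn Hm E. apply Hda'; auto.
    destruct (Hsg n Hn) as [_ [_ E1]]; destruct (Hsg m Hm) as [_ [_ E2]]; congruence.
  - intros n Hn; destruct (Hsg n Hn) as [_ [? ?]]; auto.
Qed.
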